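(* Assume $S$ is symmetric. Then for every integer $k\ge0$, $F_k=F_k^+F_k^-$. Moreover, let $k\ge1$ with $F_{k+1}\neq0$ (so that $1-A_k$ is invertible and $F^\pm_{k+1}\ne0$) and put $E_{k,\ell}:=[(1-A_k)^{-1}]_{0,\ell}$ for $0\le\ell\le k$. Then for every $\ell$ with $0\le\ell<k/2$, $$E_{k,\ell}+E_{k,k-\ell}=\frac{F^+_{k,\ell}}{F^+_{k+1}},\qquad E_{k,\ell}-E_{k,k-\ell}=\frac{F^-_{k,\ell}}{F^-_{k+1}},$$ and if $k$ is even, $E_{k,k/2}=F^+_{k,k/2}/F^+_{k+1}$.
   Context: Let $S$ be a finite set of integers with $a:=\max S\ge1$; $S$ is called symmetric if $-S=S$ and $\omega_{-s}=\omega_s$ for all $s\in S$, where each $s\in S$ carries a weight $\omega_s$ in a field $K$ of characteristic $0$; set $\omega_s:=0$ for $s\notin S$. For $k\ge0$, $A_k$ is the $(k+1)\times(k+1)$ matrix with rows and columns indexed by $0,\dots,k$ whose $(i,j)$ entry is $\omega_{j-i}$; $F_0:=1$ and $F_k:=\det(1-A_{k-1})$ for $k\ge1$. (For formal weights, $E_{k,\ell}$ is the weighted generating function of paths with steps in $S$ from $0$ to $\ell$ staying within $[0,k]$.) For $k\ge0$, $A_k^+$ is the matrix with rows and columns indexed by the integers $0\le i,j\le k/2$ and entries $\omega_{j-i}+\omega_{k-j-i}$ if $j<k/2$ and $\omega_{j-i}$ if $j=k/2$; $A_k^-$ is the matrix with rows and columns indexed by the integers $0\le i,j<k/2$ and entries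 $\omega_{j-i}-\omega_{k-j-i}$. The determinant of an empty matrix is $1$. Put $F^\pm_0:=1$ and $F^\pm_k:=\det(1-A^\pm_{k-1})$ for $k\ge1$. For an index $\ell$ of $A^\pm_k$, $F^\pm_{k,\ell}$ is the $(\ell,0)$ cofactor of $1-A_k^\pm$, i.e. $(-1)^\ell$ times the determinant of $1-A_k^\pm$ with row $\ell$ and column $0$ deleted. *)

(* Defs.v *)
From HB Require Import structures.
From mathcomp Require Import all_boot all_order all_algebra.
Set Implicit Arguments. Unset Strict Implicit. Unset Printing Implicit Defensive.
Import Order.TTheory GRing.Theory Num.Theory.
Local Open Scope ring_scope.

(* Weights are a function om : int -> K (om s = omega_s; zero off S). *)
Section Walks.
Variable K : fieldType.
Variable om : int -> K.

Definition Amat (k : nat) : 'M[K]_(k.+1) :=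
  \matrix_(i < k.+1, j < k.+1) om (j%:Z - i%:Z).

(* A_k^+ : indices 0 <= i,j <= k/2, i.e. 0 <= i,j <= k./2 *)
Definition Aplus (k : nat) : 'M[K]_((k./2).+1) :=
  \matrix_(i < (k./2).+1, j < (k./2).+1)
    (if (2 * j < k)%N then om (j%:Z - i%:Z) + om (k%:Z - j%:Z - i%:Z)
     else om (j%:Z - i%:Z)).

(* A_k^- : indices 0 <= i,j < k/2, i.e. 0 <= i,j < (k+1)./2 *)
Definition Aminus (k : nat) : 'M[K]_((k.+1)./2) :=
  \matrix_(i < (k.+1)./2, j < (k.+1)./2)
    (om (j%:Z - i%:Z) - om (k%:Z - j%:Z - i%:Z)).

Definition Fk (k : nat) : K :=
  if k is k'.+1 then \det (1%:M - Amat k') else 1.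
Definition Fplus (k : nat) : K :=
  if k is k'.+1 then \det (1%:M - Aplus k') else 1.
Definition Fminus (k : nat) : K :=
  if k is k'.+1 then \det (1%:M - Aminus k') else 1.

(* (l,0) cofactor of a square matrix, for a natural index l (0 if out of range) *)
Definition cof_l0 n (M : 'M[K]_n) (l : nat) : K :=
  match (insub l : option 'I_n), (insub 0%N : option 'I_n) with
  | Some i, Some j => cofactor M i j
  | _, _ => 0
  end.

Definition Fplus_kl (k l : nat) : K := cof_l0 (1%:M - Aplus k) l.
Definition Fminus_kl (k l : nat) : K := cof_l0 (1%:M - Aminus k) l.

Definition Ekl (k l : nat) : K := invmx (1%:M - Amat k) ord0 (inord l).

End Walks.

(* Main.v *)
Require Import Defs.
From HB Require Import structures.
From mathcomp Require Import all_boot all_order all_algebra zify ring.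
Set Implicit Arguments. Unset Strict Implicit. Unset Printing Implicit Defensive.
Import Order.TTheory GRing.Theory Num.Theory.
Local Open Scope ring_scope.

Section Aux.
Variable K : fieldType.

Lemma sum_indl n (i0 : 'I_n) (c : bool) (G : 'I_n -> K) (P : 'I_n -> bool) :
  (forall j : 'I_n, P j = ((j : nat) == i0) && c) ->
  \sum_(j < n) (P j)%:R * G j = c%:R * G i0.
Proof.
move=> hP; rewrite (bigD1 i0) //= big1 => [|j hj].
  by rewrite hP eqxx addr0.
rewrite hP; case: eqP => [e|_]; last by rewrite mul0r.
by case/eqP: hj; apply: val_inj.
Qed.

Lemma sum_indr n (i0 : 'I_n) (c : bool) (G : 'I_n -> K) (P : 'I_n -> bool) :
  (forall j : 'I_n, P j = ((j : nat) == i0) && c) ->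
  \sum_(j < n) G j * (P j)%:R = c%:R * G i0.
Proof. move=> hP; rewrite -(sum_indl G hP); apply: eq_bigr => j _; exact: mulrC. Qed.

Lemma sum_ind0l n (G : 'I_n -> K) (P : 'I_n -> bool) :
  (forall j : 'I_n, P j = false) -> \sum_(j < n) (P j)%:R * G j = 0.
Proof. by move=> hP; rewrite big1 // => j _; rewrite hP mul0r. Qed.

Lemma sum_ind0r n (G : 'I_n -> K) (P : 'I_n -> bool) :
  (forall j : 'I_n, P j = false) -> \sum_(j < n) G j * (P j)%:R = 0.
Proof. by move=> hP; rewrite big1 // => j _; rewrite hP mulr0. Qed.

Ltac side := let j := fresh "j" in move=> j; rewrite -?val_eqE /=; have := ltn_ord j;
  (lia || (match goal with |- ?g => idtac "FAIL" g end; fail)).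
Variable om : int -> K.
Hypothesis oe : forall z, om (- z) = om z.

Definition Tp (m : nat) : 'M[K]_(m.+1, (m./2).+1) :=
  \matrix_(i, a) (((i : nat) == a)%:R + (((i + a == m)%N && (2 * a < m)%N))%:R).
Definition Tm (m : nat) : 'M[K]_(m.+1, (m.+1)./2) :=
  \matrix_(i, b) (((i : nat) == b)%:R - ((i + b == m)%N)%:R).

Lemma A_Tp m : Amat om m *m Tp m = Tp m *m Aplus om m.
Proof.
have hm := odd_double_half m.
apply/matrixP => i a; rewrite !mxE.
under eq_bigr => j _ do rewrite !mxE mulrDr.
under [in RHS]eq_bigr => j _ do rewrite !mxE mulrDl.
rewrite !big_split /=.
have hi0 := ltn_ord i; have ha0 := ltn_ord a.
have ha1 : (a < m.+1)%N by lia.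
have ha2 : (m - a < m.+1)%N by lia.
rewrite (@sum_indr _ (Ordinal ha1) true); last by side.
case: (ltnP (2 * a) m) => ha; rewrite ?andbT ?andbF.
  rewrite (@sum_indr _ (Ordinal ha2) true); last by side.
  2: rewrite sum_ind0r; last by move=> j; rewrite andbF.
all: case: (leqP (2 * i) m) => hi.
1,3: have hip : (i < m./2.+1)%N by lia.
1,2: rewrite (@sum_indl _ (Ordinal hip) true); last by side.
1,2: rewrite sum_ind0l; last by side.
all: try (have hip : (m - i < m./2.+1)%N by lia).
3,4: rewrite sum_ind0l; last by side.
3,4: rewrite (@sum_indl _ (Ordinal hip) true); last by side.
all: rewrite /= ?mul1r ?addr0 ?add0r.
- by congr (_ + om _); lia.
- by [].
- by rewrite addrC; congr (_ + _); rewrite -oe; congr om; lia.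
- by rewrite -oe; congr om; lia.
Qed.

Lemma A_Tm m : Amat om m *m Tm m = Tm m *m Aminus om m.
Proof.
have hm := odd_double_half m.
have hq : (uphalf m = odd m + m./2)%N by rewrite uphalf_half.
apply/matrixP => i b; rewrite !mxE.
under eq_bigr => j _ do rewrite !mxE mulrBr.
under [in RHS]eq_bigr => j _ do rewrite !mxE mulrBl.
rewrite !sumrB /=.
have hi0 := ltn_ord i.
have hb0 : (@nat_of_ord (uphalf m) b < uphalf m)%N := ltn_ord b.
have hb1 : (@nat_of_ord (uphalf m) b < m.+1)%N by lia.
have hb2 : (m - @nat_of_ord (uphalf m) b < m.+1)%N by lia.
rewrite (@sum_indr _ (Ordinal hb1) true); last by side.
rewrite (@sum_indr _ (Ordinal hb2) true); last by side.
case: (ltnP (2 * i) m) => hi; last case: (ltnP m (2 * i)) => hi'.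
- have hip : (i < uphalf m)%N by lia.
  rewrite (@sum_indl _ (Ordinal hip) true); last by side.
  rewrite sum_ind0l; last by side.
  rewrite /= !mul1r subr0; congr (_ - om _); lia.
- have hip : (m - i < uphalf m)%N by lia.
  rewrite sum_ind0l; last by side.
  rewrite (@sum_indl _ (Ordinal hip) true); last by side.
  rewrite /= !mul1r sub0r opprB; congr (_ - _); rewrite -oe; congr om; lia.
- rewrite sum_ind0l; last by side.
  rewrite sum_ind0l; last by side.
  rewrite /= !mul1r subr0; apply/eqP; rewrite subr_eq0; apply/eqP.
  rewrite -oe; congr om; lia.
Qed.

Hypothesis two : (2%:R : K) != 0.

Ltac bsimp := repeat match goal with
 | |- context [ @eq_op Datatypes_nat__canonical__eqtype_Equality ?x ?y ] =>
   first [ rewrite (_ : (x == y) = true); [| by lia] | rewrite (_ : (x == y) = false); [|by lia] ]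
 | |- context [ leq ?x ?y ] =>
   first [ rewrite (_ : (leq x y) = true); [| by lia] | rewrite (_ : (leq x y) = false); [|by lia] ]
 end.

Definition Up (m : nat) : 'M[K]_((m./2).+1, m.+1) :=
  \matrix_(a, j) ((if (2 * a < m)%N then 2^-1 else 1) *
     (((j : nat) == a)%:R + (((j + a == m)%N && (2 * a < m)%N))%:R)).
Definition Um (m : nat) : 'M[K]_((m.+1)./2, m.+1) :=
  \matrix_(b, j) (2^-1 * (((j : nat) == b)%:R - ((j + b == m)%N)%:R)).

Lemma UpTp m : Up m *m Tp m = 1%:M.
Proof.
have hm := odd_double_half m.
apply/matrixP => a b; rewrite !mxE.
under eq_bigr => j _ do rewrite [Up m a j]mxE -mulrA mulrDl.
rewrite -big_distrr /= big_split /=.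
have ha0 := ltn_ord a; have hb0 := ltn_ord b.
have ha1 : (a < m.+1)%N by lia.
have ha2 : (m - a < m.+1)%N by lia.
rewrite (@sum_indl _ (Ordinal ha1) true); last by side.
case: (ltnP (2 * a) m) => ha.
- rewrite (@sum_indl _ (Ordinal ha2) true); last by side.
  rewrite !mxE /= -val_eqE /=; case: (eqVneq (nat_of_ord a) (nat_of_ord b)) => hab; bsimp; rewrite /=.
    by field; exact two.
  by rewrite ?(mul1r, mulr1, mul0r, mulr0, addr0, add0r, subr0, sub0r).
- rewrite sum_ind0l; last by side.
  rewrite !mxE /= -val_eqE /=; case: (eqVneq (nat_of_ord a) (nat_of_ord b)) => hab; bsimp; rewrite /=.
    all: by rewrite ?(mul1r, mulr1, mul0r, mulr0, addr0, add0r, subr0, sub0r).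
Qed.

Ltac fin := rewrite /= ?(mulr0n, mulr1n, mul1r, mulr1, mul0r, mulr0, addr0, add0r, subr0, sub0r, subrr, oppr0);
  first [done | (field; exact two)].

Lemma UpTm m : Up m *m Tm m = 0.
Proof.
have hm := odd_double_half m.
have hq : (uphalf m = odd m + m./2)%N by rewrite uphalf_half.
apply/matrixP => a b; rewrite !mxE.
under eq_bigr => j _ do rewrite [Up m a j]mxE -mulrA mulrDl.
rewrite -big_distrr /= big_split /=.
have ha0 := ltn_ord a.
have hb0 : (@nat_of_ord (uphalf m) b < uphalf m)%N := ltn_ord b.
have ha1 : (a < m.+1)%N by lia.
have ha2 : (m - a < m.+1)%N by lia.
rewrite (@sum_indl _ (Ordinal ha1) true); last by side.
case: (ltnP (2 * a) m) => ha.
- rewrite (@sum_indl _ (Ordinal ha2) true); last by side.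
  rewrite !mxE /=; case: (eqVneq (nat_of_ord a) (@nat_of_ord (uphalf m) b)) => hab; bsimp; fin.
- rewrite sum_ind0l; last by side.
  rewrite !mxE /=; case: (eqVneq (nat_of_ord a) (@nat_of_ord (uphalf m) b)) => hab; bsimp; fin.
Qed.

Lemma UmTp m : Um m *m Tp m = 0.
Proof.
have hm := odd_double_half m.
have hq : (uphalf m = odd m + m./2)%N by rewrite uphalf_half.
apply/matrixP => b a; rewrite !mxE.
under eq_bigr => j _ do rewrite [Um m b j]mxE -mulrA mulrBl.
rewrite -big_distrr /= sumrB /=.
have ha0 := ltn_ord a.
have hb0 : (@nat_of_ord (uphalf m) b < uphalf m)%N := ltn_ord b.
have hb1 : (@nat_of_ord (uphalf m) b < m.+1)%N by lia.
have hb2 : (m - @nat_of_ord (uphalf m) b < m.+1)%N by lia.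
rewrite (@sum_indl _ (Ordinal hb1) true); last by side.
rewrite (@sum_indl _ (Ordinal hb2) true); last by side.
rewrite !mxE /=; case: (eqVneq (nat_of_ord a) (@nat_of_ord (uphalf m) b)) => hab; bsimp; fin.
Qed.

Lemma UmTm m : Um m *m Tm m = 1%:M.
Proof.
have hm := odd_double_half m.
have hq : (uphalf m = odd m + m./2)%N by rewrite uphalf_half.
apply/matrixP => b a; rewrite !mxE.
under eq_bigr => j _ do rewrite [Um m b j]mxE -mulrA mulrBl.
rewrite -big_distrr /= sumrB /=.
have ha0 : (@nat_of_ord (uphalf m) a < uphalf m)%N := ltn_ord a.
have hb0 : (@nat_of_ord (uphalf m) b < uphalf m)%N := ltn_ord b.
have hb1 : (@nat_of_ord (uphalf m) b < m.+1)%N by lia.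
have hb2 : (m - @nat_of_ord (uphalf m) b < m.+1)%N by lia.
rewrite (@sum_indl _ (Ordinal hb1) true); last by side.
rewrite (@sum_indl _ (Ordinal hb2) true); last by side.
rewrite !mxE /= -val_eqE /=; case: (eqVneq (@nat_of_ord (uphalf m) b) (@nat_of_ord (uphalf m) a)) => hab; bsimp; fin.
Qed.

Lemma det_split n p q (e : n = (p + q)%N) (M : 'M[K]_n) (Mp : 'M_p) (Mq : 'M_q)
  (T1 : 'M_(n,p)) (T2 : 'M_(n,q)) (U1 : 'M_(p,n)) (U2 : 'M_(q,n)) :
  M *m T1 = T1 *m Mp -> M *m T2 = T2 *m Mq -> U1 *m T1 = 1%:M -> U1 *m T2 = 0 ->
  U2 *m T1 = 0 -> U2 *m T2 = 1%:M -> \det M = \det Mp * \det Mq.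
Proof.
subst n => h1 h2 h3 h4 h5 h6.
have hUT : col_mx U1 U2 *m row_mx T1 T2 = 1%:M
  by rewrite mul_col_row h3 h4 h5 h6 -scalar_mx_block.
have [_ hT] := mulmx1_unit hUT.
have hMT : M *m row_mx T1 T2 = row_mx T1 T2 *m block_mx Mp 0 0 Mq
  by rewrite mul_mx_row mul_row_block !mulmx0 addr0 add0r h1 h2.
have := congr1 determinant hMT; rewrite !det_mulmx det_ublock [\det (row_mx _ _) * _]mulrC.
apply: mulIf; by rewrite -unitfE -unitmxE.
Qed.

Lemma fact_det m :
  \det (1%:M - Amat om m) = \det (1%:M - Aplus om m) * \det (1%:M - Aminus om m).
Proof.
have e : m.+1 = ((m./2).+1 + (m.+1)./2)%N.
  by rewrite -uphalfE uphalf_half; have := odd_double_half m; lia.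
apply: (det_split e (T1 := Tp m) (T2 := Tm m) (U1 := Up m) (U2 := Um m)).
- by rewrite mulmxBl mulmxBr mul1mx mulmx1 A_Tp.
- by rewrite mulmxBl mulmxBr mul1mx mulmx1 A_Tm.
- exact: UpTp.
- exact: UpTm.
- exact: UmTp.
- exact: UmTm.
Qed.

Lemma inv_rel n p (M : 'M[K]_n) (Mp : 'M_p) (T1 : 'M_(n, p)) :
  M \in unitmx -> Mp \in unitmx -> M *m T1 = T1 *m Mp ->
  invmx M *m T1 = T1 *m invmx Mp.
Proof.
move=> hM hP h.
have : invmx M *m (M *m T1) *m invmx Mp = invmx M *m (T1 *m Mp) *m invmx Mp by rewrite h.
by rewrite mulKmx // -!mulmxA mulmxV // mulmx1 => ->.
Qed.

Lemma cof_l0E n (M : 'M[K]_n) l (hl : (l < n)%N) (h0 : (0 < n)%N) :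
  cof_l0 M l = cofactor M (Ordinal hl) (Ordinal h0).
Proof.
rewrite /cof_l0; case: insubP => [i _ ei|]; last by rewrite hl.
case: insubP => [j _ ej|]; last by rewrite h0.
by congr cofactor; apply: val_inj.
Qed.

Lemma inv_entry n (M : 'M[K]_n) (i j : 'I_n) : M \in unitmx ->
  invmx M i j = cofactor M j i / \det M.
Proof. by move=> hM; rewrite /invmx hM !mxE mulrC. Qed.

Lemma units k : Fk om k.+1 != 0 ->
  [/\ (1%:M - Amat om k) \in unitmx, (1%:M - Aplus om k) \in unitmx
    & (1%:M - Aminus om k) \in unitmx].
Proof.
rewrite /= fact_det mulf_eq0 negb_or => /andP [h1 h2].
by rewrite !unitmxE !unitfE fact_det mulf_neq0.
Qed.

Lemma plus_entry k l (hk : (1 <= k)%N) (hl : (l < (k./2).+1)%N) : Fk om k.+1 != 0 ->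
  Ekl om k l + (2 * l < k)%N%:R * Ekl om k (k - l) = Fplus_kl om k l / Fplus om k.+1.
Proof.
move=> hF; have [hM hP hQ] := units hF.
have hm := odd_double_half k.
have hrel : invmx (1%:M - Amat om k) *m Tp k = Tp k *m invmx (1%:M - Aplus om k).
  by apply: inv_rel => //; rewrite mulmxBl mulmxBr mul1mx mulmx1 A_Tp.
have hl1 : (l < k.+1)%N by lia.
have hl2 : (k - l < k.+1)%N by lia.
have h0p : (0 < (k./2).+1)%N by [].
have := congr1 (fun X : 'M[K]_(k.+1, (k./2).+1) => X ord0 (Ordinal hl)) hrel; rewrite /= !mxE.
under eq_bigr => j _ do rewrite [Tp k _ _]mxE mulrDr.
under [X in _ = X -> _]eq_bigr => j _ do rewrite [Tp k _ _]mxE mulrDl.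
rewrite !big_split /=.
rewrite (@sum_indr _ (Ordinal hl1) true); last by side.
rewrite (@sum_indr _ (Ordinal hl2) (2 * l < k)%N); last by side.
rewrite (@sum_indl _ (Ordinal h0p) true); last by side.
rewrite sum_ind0l; last by side.
rewrite !mul1r addr0 => E.
rewrite /Ekl.
have -> : (inord l : 'I_k.+1) = Ordinal hl1 by apply: val_inj; rewrite /= inordK.
have -> : (inord (k - l) : 'I_k.+1) = Ordinal hl2 by apply: val_inj; rewrite /= inordK.
rewrite E /Fplus_kl (cof_l0E _ hl h0p) /= -inv_entry //.
Qed.

Lemma minus_entry k l (hk : (1 <= k)%N) (hl : (l < uphalf k)%N) : Fk om k.+1 != 0 ->
  Ekl om k l - Ekl om k (k - l) = Fminus_kl om k l / Fminus om k.+1.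
Proof.
move=> hF; have [hM hP hQ] := units hF.
have hm := odd_double_half k.
have hq : (uphalf k = odd k + k./2)%N by rewrite uphalf_half.
have hrel : invmx (1%:M - Amat om k) *m Tm k = Tm k *m invmx (1%:M - Aminus om k).
  by apply: inv_rel => //; rewrite mulmxBl mulmxBr mul1mx mulmx1 A_Tm.
have hl1 : (l < k.+1)%N by lia.
have hl2 : (k - l < k.+1)%N by lia.
have h0q : (0 < uphalf k)%N by lia.
have := congr1 (fun X : 'M[K]_(k.+1, (k.+1)./2) => X ord0 (Ordinal hl)) hrel; rewrite /= !mxE.
under eq_bigr => j _ do rewrite [Tm k _ _]mxE mulrBr.
under [X in _ = X -> _]eq_bigr => j _ do rewrite [Tm k _ _]mxE mulrBl.
rewrite !sumrB /=.
rewrite (@sum_indr _ (Ordinal hl1) true); last by side.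
rewrite (@sum_indr _ (Ordinal hl2) true); last by side.
rewrite (@sum_indl _ (Ordinal h0q) true); last by side.
rewrite sum_ind0l; last by side.
rewrite !mul1r subr0 => E.
rewrite /Ekl.
have -> : (inord l : 'I_k.+1) = Ordinal hl1 by apply: val_inj; rewrite /= inordK.
have -> : (inord (k - l) : 'I_k.+1) = Ordinal hl2 by apply: val_inj; rewrite /= inordK.
rewrite E /Fminus_kl (cof_l0E _ hl h0q) /= -inv_entry //.
Qed.

End Aux.

Unset Implicit Arguments.
Set Strict Implicit.
Set Printing Implicit Defensive.

Theorem mainTheorem11 (K : fieldType) (S : seq int) (om : int -> K)
  (hchar : [pchar K] =i pred0)
  (hsupp : forall s : int, s \notin S -> om s = 0)
  (hmax : has (fun s : int => 1 <= s) S)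
  (hsymS : forall s : int, s \in S -> - s \in S)
  (hsymw : forall s : int, s \in S -> om (- s) = om s) :
  (forall k : nat, Fk om k = Fplus om k * Fminus om k) /\
  (forall k : nat, (1 <= k)%N -> Fk om k.+1 != 0 ->
     (forall l : nat, (2 * l < k)%N ->
        Ekl om k l + Ekl om k (k - l) = Fplus_kl om k l / Fplus om k.+1 /\
        Ekl om k l - Ekl om k (k - l) = Fminus_kl om k l / Fminus om k.+1) /\
     (~~ odd k -> Ekl om k k./2 = Fplus_kl om k k./2 / Fplus om k.+1)).
Proof.
have oe : forall z, om (- z) = om z.
  move=> z; case hz: (z \in S); first exact: hsymw.
  have hz' : - z \notin S by apply/negP => /hsymS; rewrite opprK hz.
  by rewrite !hsupp // hz.
have two : (2%:R : K) != 0 by have := hchar 2%N; rewrite !inE /= => ->.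
split.
  by case=> [|m]; [rewrite /= mulr1 | exact: (fact_det oe two m)].
move=> k hk hF; have hm := odd_double_half k; split.
  move=> l hl; split.
    have hl' : (l < (k./2).+1)%N by lia.
    by rewrite -(plus_entry oe two hk hl' hF) hl mul1r.
  have hl' : (l < uphalf k)%N by rewrite uphalf_half; lia.
  exact: (minus_entry oe two hk hl' hF).
move=> hev; have ho : odd k = false := negbTE hev.
rewrite ho in hm.
have hl' : (k./2 < (k./2).+1)%N by [].
rewrite -(plus_entry oe two hk hl' hF).
have -> : (2 * k./2 < k)%N = false by lia.
by rewrite mul0r addr0.
Qed.
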